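(* Let $D$ be a virtual knot diagram of a virtual knot. Then $D$ can be transformed into the trivial knot diagram by a finite sequence of (classical) Reidemeister moves, virtual Reidemeister moves, and forbidden detour moves. Moreover, if $D$ has $c$ real crossings, then this can be done using at most $\frac{(c-1)(2c^{2}+11c-3)}{24}$ forbidden detour moves if $c$ is odd, and at most $\frac{c(2c^{2}+9c-14)}{24}$ forbidden detour moves if $c$ is even.
   Context: Virtual knots are equivalence classes of virtual knot diagrams (planar diagrams with real (classical) crossings and virtual crossings) under classical Reidemeister moves and virtual Reidemeister moves; equivalently, equivalence classes of Gauss diagrams under the Gauss-diagram versions of the Reidemeister moves. The Gauss diagram of a diagram with $c$ real crossings is an oriented circle with $c$ signed arrows, one per real crossing, joining the two preimages of the crossing (oriented from the over-crossing preimage to the under-crossing preimage, signed by the local writhe of the crossing); virtual crossings are not recorded. A forbidden detour move (the $F_2'$-move of Kanenobu) is the local move on virtual knot diagrams whose effect on the Gauss diagram is the following: if the head of one arrow and the tail of a different arrow are adjacent on the circle (no other arrow endpoints between them), their positions are exchanged, with all signs kept. The trivial knot diagram is the diagram with no crossings. *)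

(* Defs.v *)
(* Virtual knot diagrams modulo virtual Reidemeister moves
   are encoded by their Gauss diagrams, written as cyclic Gauss words. *)
From mathcomp Require Import all_boot all_algebra.
Set Implicit Arguments. Unset Strict Implicit. Unset Printing Implicit Defensive.
Import GRing.Theory.

(* An arrow endpoint: (label, is_head, sign).  is_head = false : tail
   (over-crossing preimage), is_head = true : head (under-crossing preimage);
   sign = true : local writhe +1, sign = false : local writhe -1. *)
Definition letter := (nat * bool * bool)%type.
Definition gword := seq letter.

Definition lbl (e : letter) : nat := e.1.1.
Definition is_head (e : letter) : bool := e.1.2.
Definition sgnb (e : letter) : bool := e.2.

Definition tl (n : nat) (s : bool) : letter := (n, false, s).
Definition hd (n : nat) (s : bool) : letter := (n, true, s).

Definition labels (w : gword) : seq nat := map lbl w.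

Definition gauss_word (w : gword) : Prop :=
  forall n, n \in labels w ->
    exists s, [/\ count (pred1 (tl n s)) w = 1%N,
                  count (pred1 (hd n s)) w = 1%N &
                  count (fun e => lbl e == n) w = 2%N].

Definition trivial_gword : gword := [::].

Definition sgn (b : bool) : int := if b then 1%R else (-1)%R.

(* Three strands
   (top, middle, bottom) pairwise cross; arrow a : top -> middle,
   arrow b : top -> bottom, arrow c : middle -> bottom.  T, M, B are the
   2-letter fragments of the three strands (in the order met along the
   orientation).  A planar R3 triangle is given by its orientation tau and by
   alpha_i = whether strand i runs along the cyclic orientation A->B->C of the
   triangle (A = a, B = c, C = b as vertices); this determines both the
   order of endpoints on each fragment and the crossing signs. *)
Definition r3_triangle (T M B : gword) : Prop :=
  exists (a b c : nat) (ea eb ec tau al1 al2 al3 : bool),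
    [/\ uniq [:: a; b; c],
        (sgn ea = sgn tau * sgn al1 * sgn al2)%R,
        (sgn eb = - (sgn tau * sgn al1 * sgn al3))%R,
        (sgn ec = sgn tau * sgn al2 * sgn al3)%R &
      [/\ T = (if al1 then [:: tl b eb; tl a ea] else [:: tl a ea; tl b eb]),
          M = (if al2 then [:: hd a ea; tl c ec] else [:: tl c ec; hd a ea]) &
          B = (if al3 then [:: hd c ec; hd b eb] else [:: hd b eb; hd c ec])]].

Inductive rmove : gword -> gword -> Prop :=
| rm_rot w : rmove w (rot 1 w)
| rm_R1_del u v m s (h : bool) :
    rmove (u ++ [:: (m, h, s); (m, ~~ h, s)] ++ v) (u ++ v)
| rm_R1_ins u v m s (h : bool) : m \notin labels (u ++ v) ->
    rmove (u ++ v) (u ++ [:: (m, h, s); (m, ~~ h, s)] ++ v)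
| rm_R2_del u1 u2 u3 m n s (o p : bool) : m != n ->
    let X := [:: tl m s; tl n (~~ s)] in
    let Y := if o then [:: hd m s; hd n (~~ s)] else [:: hd n (~~ s); hd m s] in
    rmove (u1 ++ (if p then X else Y) ++ u2 ++ (if p then Y else X) ++ u3)
          (u1 ++ u2 ++ u3)
| rm_R2_ins u1 u2 u3 m n s (o p : bool) : m != n ->
    m \notin labels (u1 ++ u2 ++ u3) -> n \notin labels (u1 ++ u2 ++ u3) ->
    let X := [:: tl m s; tl n (~~ s)] in
    let Y := if o then [:: hd m s; hd n (~~ s)] else [:: hd n (~~ s); hd m s] in
    rmove (u1 ++ u2 ++ u3)
          (u1 ++ (if p then X else Y) ++ u2 ++ (if p then Y else X) ++ u3)
| rm_R3 u1 u2 u3 u4 (P Q R T M B : gword) :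
    r3_triangle T M B -> perm_eq [:: P; Q; R] [:: T; M; B] ->
    rmove (u1 ++ P ++ u2 ++ Q ++ u3 ++ R ++ u4)
          (u1 ++ rev P ++ u2 ++ rev Q ++ u3 ++ rev R ++ u4).

Inductive fmove : gword -> gword -> Prop :=
| fm u v (x y : letter) : is_head x != is_head y -> lbl x != lbl y ->
    fmove (u ++ [:: x; y] ++ v) (u ++ [:: y; x] ++ v).

(* reach k w w' : w can be transformed into w' by a finite sequence of
   Reidemeister moves (classical; virtual ones are invisible on Gauss
   diagrams) and forbidden detour moves, using exactly k forbidden detour
   moves. *)
Inductive reach : nat -> gword -> gword -> Prop :=
| reach_refl w : reach 0 w w
| reach_R k w1 w2 w3 : rmove w1 w2 -> gauss_word w2 -> reach k w2 w3 -> reach k w1 w3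
| reach_F k w1 w2 w3 : fmove w1 w2 -> gauss_word w2 -> reach k w2 w3 -> reach k.+1 w1 w3.

(* Main.v *)
Require Import Defs.
From mathcomp Require Import all_boot all_algebra.
From mathcomp Require Import zify ring.
Set Implicit Arguments. Unset Strict Implicit.

Lemma reach_trans k1 k2 w1 w2 w3 :
  reach k1 w1 w2 -> reach k2 w2 w3 -> reach (k1 + k2) w1 w3.
Proof.
elim=> [w|k a b c r g _ IH|k a b c r g _ IH] H //.
- exact: reach_R r g (IH H).
- exact: reach_F r g (IH H).
Qed.

Lemma gauss_perm w w' : perm_eq w w' -> gauss_word w -> gauss_word w'.
Proof.
move=> pw gw n; rewrite /labels -(perm_mem (perm_map lbl pw)) => /gw [s [h1 h2 h3]].
by exists s; rewrite -!(permP pw).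
Qed.

Lemma size_undup2 (l : seq nat) : (forall n, n \in l -> count_mem n l = 2) ->
  size l = 2 * size (undup l).
Proof.
move=> H; rewrite -(perm_size (perm_count_undup l)) size_flatten /shape -map_comp.
rewrite (proj1 (@eq_in_map _ _ _ (fun _ => 2) _)); last first.
  by move=> x; rewrite mem_undup /= size_nseq => /H.
have -> : forall (s : seq nat), map (fun _ => 2) s = nseq (size s) 2.
  by elim=> //= a s ->.
by rewrite sumn_nseq.
Qed.

Lemma cnt0 A x B y C : gauss_word (A ++ x :: B ++ y :: C) -> lbl x = lbl y ->
  count (fun e => lbl e == lbl x) (A ++ B ++ C) = 0.
Proof.
move=> g e; have : lbl x \in labels (A ++ x :: B ++ y :: C).
  by rewrite /labels map_cat mem_cat /= in_cons eqxx orbT.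
move/g => [s [_ _]]; rewrite !count_cat /= !count_cat /= e eqxx /=; lia.
Qed.

Lemma gauss_del A x B y C : gauss_word (A ++ x :: B ++ y :: C) -> lbl x = lbl y ->
  gauss_word (A ++ B ++ C).
Proof.
move=> g e n nin.
have nx : n != lbl x.
  apply/eqP=> nE; have c0 := cnt0 g e.
  move: nin; rewrite /labels => /mapP [z zin zE].
  have : 0 < count (fun e => lbl e == lbl x) (A ++ B ++ C).
    by rewrite -has_count; apply/hasP; exists z => //; rewrite -zE nE.
  by rewrite c0.
have : n \in labels (A ++ x :: B ++ y :: C).
  move: nin; rewrite /labels !map_cat /= !map_cat !mem_cat /= !in_cons !mem_cat.
  by rewrite in_cons; case/or3P=> ->; rewrite ?orbT.
move/g => [s [h1 h2 h3]]; exists s; move: h1 h2 h3; rewrite !count_cat /= !count_cat /=.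
have -> : (x == tl n s) = false by apply/eqP => xE; move: nx; rewrite xE eqxx.
have -> : (y == tl n s) = false by apply/eqP => xE; move: nx; rewrite e xE eqxx.
have -> : (x == hd n s) = false by apply/eqP => xE; move: nx; rewrite xE eqxx.
have -> : (y == hd n s) = false by apply/eqP => xE; move: nx; rewrite e xE eqxx.
rewrite eq_sym (negbTE nx) -e eq_sym (negbTE nx) /=; split; lia.
Qed.

Lemma ends_types u x s y v : gauss_word (u ++ x :: s ++ y :: v) -> lbl x = lbl y ->
  exists h sg, x = (lbl x, h, sg) /\ y = (lbl x, ~~ h, sg).
Proof.
move=> g e; have c0 := cnt0 g e.
have : lbl x \in labels (u ++ x :: s ++ y :: v).
  by rewrite /labels map_cat mem_cat /= in_cons eqxx orbT.
move/g => [s0 [h1 h2 _]].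
have z : forall t, lbl t = lbl x -> count (pred1 t) (u ++ s ++ v) = 0.
  move=> t lt; apply/eqP; rewrite -leqn0 -c0; apply: sub_count => z /= /eqP ->.
  by rewrite lt.
move: (z (tl (lbl x) s0) erefl) (z (hd (lbl x) s0) erefl).
rewrite !count_cat /= !count_cat /= in h1 h2 *; clear z g c0.
move: e h1 h2; case: x => [[mx hx] sx]; case: y => [[my hy] sy].
rewrite /lbl /tl /hd /= => <-.
rewrite !xpair_eqE !eqxx /=.
case: hx; case: hy; case: (sx =P s0); case: (sy =P s0) => /= E1 E2; subst; rewrite /= ?andbF /=; try lia;
  move=> *; by [exists true, s0 | exists false, s0].
Qed.

Fixpoint inv (h : bool) (bs : seq bool) : nat :=
  match bs with
  | [::] => 0
  | b :: bs' => (if b == h then count (pred1 (~~ h)) bs' else 0) + inv h bs'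
  end.

Definition Mm h (s : gword) := inv h (map is_head s) + size s.

Lemma inv_swap h p q : inv h (p ++ h :: ~~h :: q) = (inv h (p ++ ~~h :: h :: q)).+1.
Proof.
elim: p => [|a p IH] /=.
  by case: h; rewrite /= ?eqxx /=; lia.
rewrite IH !count_cat /=; case: h a {IH} => [] [] /=; lia.
Qed.

Lemma inv_rcons h bs : inv h (rcons bs h) = inv h bs.
Proof.
elim: bs => [|a bs IH] /=; first by rewrite eqxx; case: h.
rewrite IH -cats1 count_cat /=; clear IH; have -> : (h == ~~ h) = false by case: h.
by rewrite addn0 addn0.
Qed.

Lemma inv_bound h bs : inv h bs <= count (pred1 h) bs * count (pred1 (~~h)) bs.
Proof.
elim: bs => [|a bs IH] //=.
case: (a =P h) => [->|ne] /=.
  have -> : (h == ~~ h) = false by clear IH; case: h.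
  by rewrite /= add0n mulnDl mul1n leq_add2l.
have -> : (a == ~~ h) = true by clear IH; case: a h ne => [] [].
rewrite /= add0n add0n mulnDr muln1; exact: leq_trans IH (leq_addl _ _).
Qed.

Lemma cnt_hl h bs : count (pred1 h) bs + count (pred1 (~~h)) bs = size bs.
Proof. by elim: bs => //= a bs IH; case: a h {IH} (IH) => [] [] /=; lia. Qed.

Lemma count_cons' (T : eqType) (a : pred T) x s : count a (x :: s) = a x + count a s. Proof. by []. Qed.
Lemma count_nil' (T : eqType) (a : pred T) : count a [::] = 0. Proof. by []. Qed.
Ltac pcnt := apply/permP => ?; rewrite -?cats1 ?(count_cat, count_cons', count_nil'); lia.

Lemma perm_swap2 (A B : gword) x y : perm_eq (A ++ [:: x; y] ++ B) (A ++ [:: y; x] ++ B).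
Proof. by rewrite perm_cat2l perm_cat2r (perm_catC [:: x] [:: y]). Qed.

Lemma fstep k u x y v w3 : gauss_word (u ++ [:: x; y] ++ v) -> is_head x != is_head y ->
  lbl x != lbl y -> reach k (u ++ [:: y; x] ++ v) w3 -> reach k.+1 (u ++ [:: x; y] ++ v) w3.
Proof.
move=> g h l r; apply: reach_F r; first exact: fm.
by apply: gauss_perm g; exact: perm_swap2.
Qed.

Lemma split_hl h (x0 : letter) s1 : is_head x0 = h -> is_head (last x0 s1) = ~~h ->
  exists p x y q, x0 :: s1 = p ++ [:: x; y] ++ q /\ is_head x = h /\ is_head y = ~~h.
Proof.
elim: s1 x0 => [|x1 s2 IH] x0 /=.
  by move=> -> /eqP; case: h.
move=> hx0; case: (boolP (is_head x1 == h)) => [/eqP hx1|nx1].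
  move=> /(IH _ hx1) [p [x [y [q [E [hx hy]]]]]].
  by exists (x0 :: p), x, y, q; rewrite E.
move=> _; exists [::], x0, x1, s2; split => //; split => //.
by clear IH; move: nx1; case: (is_head x1); move: hx0; case: h.
Qed.

Lemma bneq (h : bool) : h != ~~ h. Proof. by case: h. Qed.
Lemma negE (a h : bool) : a != h -> a = ~~ h. Proof. by case: a; case: h. Qed.

Lemma sortL h m sg n : forall s u v, Mm h s <= n -> uniq (labels s) -> m \notin labels s ->
  gauss_word (u ++ (m,h,sg) :: s ++ (m,~~h,sg) :: v) ->
  exists k u' v', [/\ k <= Mm h s, perm_eq (u' ++ v') (u ++ s ++ v) &
     reach k (u ++ (m,h,sg) :: s ++ (m,~~h,sg) :: v)
             (u' ++ [:: (m,h,sg); (m,~~h,sg)] ++ v')].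
Proof.
elim: n => [|n IH] [|y s1] u v hM us ms g.
- by exists 0, u, v; split => //; exact: reach_refl.
- by move: hM; rewrite /Mm /= addnS.
- by exists 0, u, v; split => //; exact: reach_refl.
case: (boolP (is_head y == h)) => hy; last first.
  have eM : Mm h (y :: s1) = (Mm h s1).+1 by rewrite /Mm /= (negbTE hy) add0n addnS.
  have hM' : Mm h s1 <= n by move: hM; rewrite eM ltnS.
  move: us ms; rewrite /labels /= in_cons negb_or => /andP [yn us] /andP [my ms].
  have W : u ++ (m, h, sg) :: (y :: s1) ++ (m, ~~ h, sg) :: v =
           u ++ [:: (m, h, sg); y] ++ (s1 ++ (m, ~~ h, sg) :: v) by [].
  have W' : u ++ [:: y; (m, h, sg)] ++ (s1 ++ (m, ~~ h, sg) :: v) =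
            rcons u y ++ (m, h, sg) :: s1 ++ (m, ~~ h, sg) :: v by rewrite cat_rcons.
  have g' : gauss_word (rcons u y ++ (m, h, sg) :: s1 ++ (m, ~~ h, sg) :: v).
    by apply: gauss_perm g; rewrite W -W'; exact: perm_swap2.
  have [k [u' [v' [kM P R]]]] := IH s1 (rcons u y) v hM' us ms g'.
  exists k.+1, u', v'; split.
  + by rewrite eM ltnS.
  + by move: P; rewrite cat_rcons.
  + rewrite W; apply: fstep; first by rewrite -W.
    * by rewrite eq_sym.
    * by [].
    * by rewrite W'.
case: (boolP (is_head (last y s1) == h)) => hz'; last first.
  have hz2 : is_head (last y s1) = ~~ h by apply: negE.
  have [p [x [x' [q [E2 [hx hx']]]]]] := split_hl (eqP hy) hz2.
  rewrite E2 in hM us ms g *.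
  set s' := p ++ [:: x'; x] ++ q.
  have ps : perm_eq s' (p ++ [:: x; x'] ++ q) by rewrite perm_sym; exact: perm_swap2.
  have eM : Mm h (p ++ [:: x; x'] ++ q) = (Mm h s').+1.
    by rewrite /Mm /s' !map_cat /= hx hx' inv_swap !size_cat /= addSn.
  have hM' : Mm h s' <= n by move: hM; rewrite eM ltnS.
  have us' : uniq (labels s') by rewrite (perm_uniq (perm_map lbl ps)).
  have ms' : m \notin labels s' by rewrite (perm_mem (perm_map lbl ps)).
  have W : u ++ (m, h, sg) :: (p ++ [:: x; x'] ++ q) ++ (m, ~~ h, sg) :: v =
           (u ++ (m, h, sg) :: p) ++ [:: x; x'] ++ (q ++ (m, ~~ h, sg) :: v).
    by rewrite -!catA.
  have W' : (u ++ (m, h, sg) :: p) ++ [:: x'; x] ++ (q ++ (m, ~~ h, sg) :: v) =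
           u ++ (m, h, sg) :: s' ++ (m, ~~ h, sg) :: v.
    by rewrite /s' -!catA.
  have g' : gauss_word (u ++ (m, h, sg) :: s' ++ (m, ~~ h, sg) :: v).
    by apply: gauss_perm g; rewrite W -W'; exact: perm_swap2.
  have [k [u' [v' [kM P R]]]] := IH s' u v hM' us' ms' g'.
  exists k.+1, u', v'; split.
  + by rewrite eM ltnS.
  + by apply: perm_trans P _; rewrite perm_cat2l perm_cat2r.
  + rewrite W; apply: fstep; first by rewrite -W.
    * by rewrite hx hx' bneq.
    * move: us; rewrite /labels map_cat cat_uniq /= in_cons negb_or.
      by case/and5P => _ _ /norP []...
    * by rewrite W'.
have [z [B [E hz]]] : exists z B, y :: s1 = rcons B z /\ z = last y s1.
  by exists (last y s1), (belast y s1); rewrite -lastI.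
rewrite E in hM us ms g *.
have lE : labels (rcons B z) = rcons (labels B) (lbl z) by rewrite /labels map_rcons.
rewrite lE rcons_uniq mem_rcons in_cons negb_or in us ms.
case/andP: us => zB uB; case/andP: ms => mz mB.
rewrite -hz in hz'.
have eM : Mm h (rcons B z) = (Mm h B).+1.
  by rewrite /Mm map_rcons size_rcons (eqP hz') inv_rcons addnS.
have hM' : Mm h B <= n by move: hM; rewrite eM ltnS.
have W : u ++ (m, h, sg) :: rcons B z ++ (m, ~~ h, sg) :: v =
         (u ++ (m, h, sg) :: B) ++ [:: z; (m, ~~ h, sg)] ++ v.
  by rewrite -cats1 -!catA.
have W' : (u ++ (m, h, sg) :: B) ++ [:: (m, ~~ h, sg); z] ++ v =
          u ++ (m, h, sg) :: B ++ (m, ~~ h, sg) :: z :: v.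
  by rewrite -!catA.
have g' : gauss_word (u ++ (m, h, sg) :: B ++ (m, ~~ h, sg) :: z :: v).
  by apply: gauss_perm g; rewrite W -W'; exact: perm_swap2.
have [k [u' [v' [kM P R]]]] := IH B u (z :: v) hM' uB mB g'.
exists k.+1, u', v'; split.
+ by rewrite eM ltnS.
+ by move: P; rewrite cat_rcons.
+ rewrite W; apply: fstep; first by rewrite -W.
  * by rewrite (eqP hz') /is_head /= bneq.
  * by rewrite eq_sym.
  * by rewrite W'.
Qed.

Lemma dupL (f : letter -> nat) l : ~~ uniq (map f l) ->
  exists p a r b q, l = p ++ a :: r ++ b :: q /\ f a = f b.
Proof.
elim: l => [|a l IH] //=; rewrite negb_and negbK; case/orP.
  case/mapP=> b bin fab; case/splitPr: bin => r q.
  by exists [::], a, r, b, q.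
case/IH=> [p [a' [r [b [q [-> E]]]]]].
by exists (a :: p), a', r, b, q.
Qed.

Lemma minpair n : forall (w : gword) u x s y v, size s <= n ->
  w = u ++ x :: s ++ y :: v -> lbl x = lbl y ->
  exists u x s y v, [/\ w = u ++ x :: s ++ y :: v, lbl x = lbl y & uniq (labels (x :: s))].
Proof.
elim: n => [|n IH] w u x s y v hs E l.
  case: s hs E => // _ E; by exists u, x, [::], y, v.
case: (boolP (uniq (labels (x :: s)))) => U; first by exists u, x, s, y, v.
case/dupL: U => [p [a [r [b [q [E2 fab]]]]]].
apply: (IH w (u ++ p) a r b (q ++ y :: v)) => //.
  have := congr1 size E2; rewrite /= size_cat /= size_cat /=; lia.
rewrite E -catA; congr (u ++ _).
have -> : x :: s ++ y :: v = (x :: s) ++ y :: v by [].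
by rewrite E2 -!catA /= -!catA.
Qed.

Fixpoint F c := match c with 0 => 0 | c'.+1 => F c' + c'./2 * (c' - c'./2) + c' end.

Lemma xbound x c : x <= c -> x * (c - x) <= c./2 * (c - c./2).
Proof.
have := odd_double_half c; set j := c./2 => Ec.
wlog xj : x / x <= j.
  move=> H xc; case: (leqP x j) => xj; first exact: H.
  have cx : c - x <= j by move: Ec; case: (odd c) => /=; lia.
  have := H (c - x) cx (leq_subr _ _).
  have -> : c - (c - x) = x by lia.
  by rewrite mulnC.
move=> xc.
have e1 : x * (c - x) = x * (c - j) + x * (j - x).
  by rewrite -mulnDr; congr (_ * _); move: Ec; case: (odd c) => /=; lia.
have e2 : j * (c - j) = x * (c - j) + (j - x) * (c - j).
  by rewrite -mulnDl; congr (_ * _); lia.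
rewrite e1 e2 leq_add2l mulnC; apply: leq_mul; move: Ec; case: (odd c) => /=; lia.
Qed.

Lemma ab_bound a b c : a + b <= c -> a * b <= c./2 * (c - c./2).
Proof.
move=> h; apply: leq_trans (xbound (_ : a <= c)); last by lia.
by apply: leq_mul => //; lia.
Qed.

Lemma main c : forall w, gauss_word w -> size w = c.*2 ->
  exists k, reach k w [::] /\ k <= F c.
Proof.
elim: c => [|c IH] w g sz.
  by case: w g sz => // g _; exists 0; split => //; exact: reach_refl.
case: w g sz => [//|x0 w'] g sz.
have : lbl x0 \in labels (x0 :: w') by rewrite /labels /= in_cons eqxx.
move/g => [s0 [_ _ c2]].
have : has (fun e => lbl e == lbl x0) w'.
  by rewrite has_count; move: c2 => /=; rewrite eqxx; lia.
case/hasP => y yin /eqP ly.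
move: g sz; case/splitPr: yin => s v g sz.
have := @minpair (size s) (x0 :: (s ++ y :: v)) [::] x0 s y v (leqnn _) erefl (esym ly).
move=> [u [x [s1 [y1 [v1 [E l U]]]]]].
rewrite E in g sz *.
have [h [sg [Ex Ey]]] := ends_types g l.
set m := lbl x in Ex Ey.
move: U; rewrite /labels /= => /andP [ms us].
have lw : forall n, n \in labels (u ++ x :: s1 ++ y1 :: v1) ->
    count_mem n (labels (u ++ x :: s1 ++ y1 :: v1)) = 2.
  move=> n /g [? [_ _ <-]]; rewrite /labels count_map; exact: eq_count.
have szs : size s1 <= c.
  have := size_undup2 lw; rewrite /labels size_map sz => E2.
  have : size (map lbl (x :: s1)) <= size (undup (map lbl (u ++ x :: s1 ++ y1 :: v1))).
    apply: uniq_leq_size; first by rewrite /= ms us.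
    move=> z zin; rewrite mem_undup map_cat mem_cat /= in_cons map_cat mem_cat.
    by move: zin; rewrite /= in_cons; case/orP => ->; rewrite ?orbT.
  rewrite /= size_map; move: E2; rewrite -mul2n => /eqP; rewrite eqn_pmul2l // => /eqP <-; exact.
rewrite Ex Ey in g *.
have := @sortL h m sg (Mm h s1) s1 u v1 (leqnn _) us ms g.
move=> [k1 [u' [v' [k1M P R]]]].
have gd : gauss_word (u' ++ v').
  apply: (@gauss_perm (u ++ s1 ++ v1)); first by rewrite perm_sym.
  exact: gauss_del g erefl.
have szd : size (u' ++ v') = c.*2.
  rewrite (perm_size P) !size_cat; move: sz; rewrite !size_cat /= size_cat /= !addnS doubleS => -[]; exact.
have [k2 [R2 k2F]] := IH _ gd szd.

exists (k1 + k2); split.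
  apply: (reach_trans R).
  apply: reach_R R2 => //; exact: rm_R1_del.
rewrite addnC -addnA; apply: leq_add => //.
apply: leq_trans k1M _; apply: leq_add => //.
apply: leq_trans (inv_bound _ _) _; apply: ab_bound.
by rewrite cnt_hl size_map.
Qed.

Lemma F_formula j : 24 * F (j.*2) + 28 * j = 16 * j ^ 3 + 36 * j ^ 2 /\
  24 * F (j.*2.+1) = 16 * j ^ 3 + 60 * j ^ 2 + 20 * j.
Proof.
have e1 : forall j, F (j.*2.+1) = F (j.*2) + j * j + j.*2.
  by move=> i; rewrite /= doubleK; congr (_ + _ + _); congr (_ * _); lia.
have e2 : forall j, F (j.+1).*2 = F (j.*2.+1) + j * (j.+1) + j.*2.+1.
  move=> i; rewrite doubleS /= uphalf_double; congr (_ + _ + _); congr (_ * _); lia.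
have P2 : forall j, 24 * F (j.*2) + 28 * j = 16 * j ^ 3 + 36 * j ^ 2 ->
   24 * F (j.*2.+1) = 16 * j ^ 3 + 60 * j ^ 2 + 20 * j.
  move=> i H; apply: (@addIn (28 * i)); rewrite e1.
  have -> : 24 * (F i.*2 + i * i + i.*2) + 28 * i = (24 * F i.*2 + 28 * i) + 24 * (i * i + i.*2).
    by ring.
  rewrite H -mul2n; ring.
elim: j => [|j [IH1 IH2]] //.
have H1 : 24 * F (j.+1).*2 + 28 * j.+1 = 16 * j.+1 ^ 3 + 36 * j.+1 ^ 2.
  rewrite e2.
  have -> : 24 * (F j.*2.+1 + j * j.+1 + j.*2.+1) + 28 * j.+1 =
            24 * F j.*2.+1 + (24 * (j * j.+1 + j.*2.+1) + 28 * j.+1) by ring.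
  rewrite IH2 -!mul2n; ring.
by split => //; apply: P2.
Qed.

Theorem theorem1p1 (c : nat) (w : gword) :
  gauss_word w -> size w = c.*2 ->
  exists k : nat, reach k w trivial_gword /\
    (if odd c then 24 * k <= (c - 1) * (2 * c ^ 2 + 11 * c - 3)
     else 24 * k <= c * (2 * c ^ 2 + 9 * c - 14)).
Proof.
move=> g sz; have [k [R kF]] := main g sz.
exists k; split => //.
have Ec := odd_double_half c; have [F1 F2] := F_formula c./2.
move: kF F1 F2 Ec; set j := c./2; case: (odd c) => kF F1 F2 Ec; rewrite -Ec.
  rewrite !add1n subn1 /=.
  have -> : 2 * (j.*2.+1) ^ 2 + 11 * (j.*2.+1) = (8 * j ^ 2 + 30 * j + 10) + 3.
    by rewrite -mul2n; ring.
  rewrite addnK.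
  have -> : j.*2 * (8 * j ^ 2 + 30 * j + 10) = 24 * F (j.*2.+1).
    by rewrite F2 -mul2n; ring.
  by rewrite leq_pmul2l //; move: kF; rewrite -Ec add1n.
rewrite add0n in Ec *.
case: j Ec F1 {F2} => [|i] Ec F1.
  by move: kF; rewrite -Ec /= leqn0 => /eqP ->.
have -> : 2 * (i.+1).*2 ^ 2 + 9 * (i.+1).*2 = (8 * i ^ 2 + 34 * i + 12) + 14.
  by rewrite -mul2n; ring.
rewrite addnK.
have -> : (i.+1).*2 * (8 * i ^ 2 + 34 * i + 12) = 24 * F (i.+1).*2.
  apply: (@addIn (28 * i.+1)); rewrite F1 -mul2n; ring.
by rewrite leq_pmul2l //; move: kF; rewrite -Ec.
Qed.
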